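(* Let $m\ge2$ be an integer, let $B\subseteq m\mathbb Z$ be an infinite set, and let $F\subseteq\mathbb Z$ be a finite nonempty set all of whose elements are congruent to $\tilde f$ modulo $m$, where $\tilde f\in\{1,\dots,m-1\}$. Suppose there exist an integer $n\ge1$ and sets $S_1,\dots,S_n$ with $S_1\cup\cdots\cup S_n=m\mathbb N\cup B$ such that for each $i$ there is $W_i\subseteq\mathbb Z$ with $m\mathbb Z\setminus S_i=F+W_i$. If \[m\ge \tilde f+2\tilde f\left\lfloor\frac{n+1}{\tilde f}\right\rfloor+\operatorname{mod}_{\tilde f}(n+1),\] then $C=m\mathbb N\cup B\cup F$ arises as a minimal additive complement in $\mathbb Z$.
   Context: $\mathbb N=\{0,1,2,\dots\}$, $m\mathbb N=\{mk:k\in\mathbb N\}$; $\operatorname{mod}_{a}n$ denotes the remainder of $n$ upon division by $a$. For $C,W\subseteq\mathbb Z$, $C+W=\{c+w:c\in C,w\in W\}$. $C$ is a minimal additive complement (MAC) to $W$ if $C+W=\mathbb Z$ and no proper subset $C'\subsetneq C$ satisfies $C'+W=\mathbb Z$. $C$ arises as a MAC if there exists $W\subseteq\mathbb Z$ to which $C$ is a MAC. *)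

(* Defs.v *)
From Stdlib Require Import ZArith List.
Open Scope Z_scope.

Definition zset := Z -> Prop.

Definition sumset (C W : zset) : zset :=
  fun z => exists c w, C c /\ W w /\ z = c + w.

Definition is_MAC (C W : zset) : Prop :=
  (forall z, sumset C W z) /\
  forall C' : zset,
    (forall x, C' x -> C x) -> (exists x, C x /\ ~ C' x) ->
    ~ (forall z, sumset C' W z).

Definition arises_as_MAC (C : zset) : Prop := exists W : zset, is_MAC C W.

Definition finite_set (A : zset) : Prop :=
  exists l : list Z, forall x, A x -> In x l.

Definition mult_nat (m : Z) : zset := fun x => exists k, 0 <= k /\ x = m * k.
Definition mult_int (m : Z) : zset := fun x => exists k, x = m * k.

(* Main.v *)
Require Import Defs.
From Stdlib Require Import ZArith List Lia Classical.
Open Scope Z_scope.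

Lemma fmax_gen (F : zset) : forall l, (exists f, F f /\ In f l) ->
  exists M, F M /\ forall f, F f -> In f l -> f <= M.
Proof.
  induction l as [|a0 l IH]; intros Hex.
  - destruct Hex as [f [_ []]].
  - destruct (classic (exists f, F f /\ In f l)) as [He|Hno].
    + destruct (IH He) as [M [HM HMle]].
      destruct (classic (F a0)) as [Fa|nFa].
      * destruct (Z.le_ge_cases a0 M).
        -- exists M; split; auto. intros f Ff Hin; destruct Hin as [Heq|Hf]. lia. auto.
        -- exists a0; split; auto. intros f Ff Hin; destruct Hin as [Heq|Hf]. lia. specialize (HMle f Ff Hf); lia.
      * exists M; split; auto. intros f Ff Hin; destruct Hin as [Heq|Hf]. rewrite <- Heq in Ff; contradiction. auto.
    + destruct Hex as [f [Ff Hin]]. destruct Hin as [Heq|Hf].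
      * exists f; split; auto. intros g Fg Hin; destruct Hin as [Heq2|Hg]. lia. exfalso; apply Hno; eauto.
      * exfalso; apply Hno; eauto.
Qed.

Lemma fmin_gen (F : zset) : forall l, (exists f, F f /\ In f l) ->
  exists M, F M /\ forall f, F f -> In f l -> M <= f.
Proof.
  induction l as [|a0 l IH]; intros Hex.
  - destruct Hex as [f [_ []]].
  - destruct (classic (exists f, F f /\ In f l)) as [He|Hno].
    + destruct (IH He) as [M [HM HMle]].
      destruct (classic (F a0)) as [Fa|nFa].
      * destruct (Z.le_ge_cases a0 M).
        -- exists a0; split; auto. intros f Ff Hin; destruct Hin as [Heq|Hf]. lia. specialize (HMle f Ff Hf); lia.
        -- exists M; split; auto. intros f Ff Hin; destruct Hin as [Heq|Hf]. lia. auto.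
      * exists M; split; auto. intros f Ff Hin; destruct Hin as [Heq|Hf]. rewrite <- Heq in Ff; contradiction. auto.
    + destruct Hex as [f [Ff Hin]]. destruct Hin as [Heq|Hf].
      * exists f; split; auto. intros g Fg Hin; destruct Hin as [Heq2|Hg]. lia. exfalso; apply Hno; eauto.
      * exfalso; apply Hno; eauto.
Qed.

Lemma fmax (F : zset) : finite_set F -> (exists f, F f) -> exists M, F M /\ forall f, F f -> f <= M.
Proof.
  intros [l Hl] [f Ff].
  destruct (fmax_gen F l (ex_intro _ f (conj Ff (Hl f Ff)))) as [M [HM H]].
  exists M; split; auto.
Qed.

Lemma fmin (F : zset) : finite_set F -> (exists f, F f) -> exists M, F M /\ forall f, F f -> M <= f.
Proof.
  intros [l Hl] [f Ff].
  destruct (fmin_gen F l (ex_intro _ f (conj Ff (Hl f Ff)))) as [M [HM H]].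
  exists M; split; auto.
Qed.

Lemma mul_small K t : 0 < K -> -K < K * t < K -> t = 0.
Proof. intros. destruct (Z.lt_trichotomy t 0) as [h|[h|h]]; nia. Qed.

Lemma modsub0 m c z : c mod m = 0 -> (z - c) mod m = z mod m.
Proof. intros H. rewrite Zminus_mod, H, Z.sub_0_r, Zmod_mod. reflexivity. Qed.

Lemma modadd0 m c z : c mod m = 0 -> (c + z) mod m = z mod m.
Proof. intros H. rewrite Zplus_mod, H, Z.add_0_l, Zmod_mod. reflexivity. Qed.

Lemma modsubF m f ft z : f mod m = ft -> (z - f) mod m = (z mod m - ft) mod m.
Proof. intros H. rewrite Zminus_mod, H. reflexivity. Qed.

Lemma rsub m ft b : 0 <= b < m -> ((b + ft) mod m - ft) mod m = b.
Proof. intros H. rewrite Zminus_mod_idemp_l. replace (b + ft - ft) with b by ring. apply Z.mod_small; auto. Qed.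

Lemma sub00 m a b : a mod m = 0 -> b mod m = 0 -> (a - b) mod m = 0.
Proof. intros Ha Hb. rewrite Zminus_mod, Ha, Hb. reflexivity. Qed.

Definition Eset (F : zset) (u Kc : Z) : zset :=
  fun z => exists f f', F f /\ F f' /\ f <> f' /\ z = u + Kc * f - f'.

Definition Wfr (m ft lo hi x Kc : Z) (a : Z -> Z) (T : Z -> zset) (F : zset) : zset :=
  fun y =>
  (exists j, lo <= j <= hi /\ y mod m = (a j + ft) mod m /\ y = (a j + ft) mod m) \/
  (exists j, lo <= j <= hi /\ y mod m = a j /\ forall f, F f -> ~ T j (y - (a j + ft) mod m + f)) \/
  (y mod m = x /\ ~ Eset F ((x + ft) mod m) Kc y) \/
  (y mod m <> (x + ft) mod m /\ y mod m <> x /\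
     forall j, lo <= j <= hi -> y mod m <> a j /\ y mod m <> (a j + ft) mod m).

Lemma framework (m ft : Z) (C0 F : zset) (lo hi x : Z) (a : Z -> Z) (T : Z -> zset) :
  2 <= m -> 1 <= ft <= m - 1 ->
  (forall c, C0 c -> c mod m = 0) ->
  (forall k, 0 <= k -> C0 (m * k)) ->
  (forall f, F f -> f mod m = ft) ->
  finite_set F -> (exists f, F f) ->
  0 <= x < m ->
  (forall j, lo <= j <= hi -> 0 <= a j < m) ->
  (forall j k, lo <= j <= hi -> lo <= k <= hi -> a j = a k -> j = k) ->
  (forall j k, lo <= j <= hi -> lo <= k <= hi -> (a j + ft) mod m = (a k + ft) mod m -> j = k) ->
  (forall j k, lo <= j <= hi -> lo <= k <= hi -> a j <> (a k + ft) mod m) ->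
  (forall j, lo <= j <= hi -> a j <> x /\ a j <> (x + ft) mod m /\
       (a j + ft) mod m <> x /\ (a j + ft) mod m <> (x + ft) mod m) ->
  x <> (x + ft) mod m ->
  (forall c, C0 c -> exists j, lo <= j <= hi /\ T j c) ->
  (forall j, lo <= j <= hi -> forall g, g mod m = 0 -> ~ C0 g ->
      exists f w, F f /\ g = f + w /\ forall f', F f' -> ~ T j (w + f')) ->
  (forall j, lo <= j <= hi ->
     ((a j - ft) mod m <> x /\ (a j - ft) mod m <> (x + ft) mod m /\
        forall k, lo <= k <= hi -> (a j - ft) mod m <> a k /\ (a j - ft) mod m <> (a k + ft) mod m)
     \/ (forall y, y mod m = a j -> exists c, C0 c /\
            forall f, F f -> ~ T j (y - c - (a j + ft) mod m + f))) ->
  arises_as_MAC (fun z => C0 z \/ F z).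
Proof.
  intros Hm Hft HC0m HC0N HFm HFfin HFne Hx Ha Hainj Hrinj Har Hax Hxu Hcov Hgap Hself.
  destruct (fmax F HFfin HFne) as [fM [HfM HfMle]].
  destruct (fmin F HFfin HFne) as [fm [Hfm Hfmle]].
  assert (Hm0 : m <> 0) by lia.
  set (u := (x + ft) mod m) in *.
  set (d := fM - fm).
  set (Kc := m * (2 * d + 1)).
  assert (Hd : 0 <= d) by (specialize (HfMle fm Hfm); unfold d; lia).
  assert (HKc : 2 * d < Kc) by (unfold Kc; nia).
  set (E := Eset F u Kc).
  assert (Hux : (u - ft) mod m = x) by (unfold u; apply rsub; lia).
  assert (Hrm : forall j, ((a j + ft) mod m) mod m = (a j + ft) mod m) by (intros; apply Zmod_mod).
  assert (Hra : forall j, lo <= j <= hi -> ((a j + ft) mod m - ft) mod m = a j)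
    by (intros j Hj; apply rsub; apply Ha; auto).
  exists (Wfr m ft lo hi x Kc a T F).
  assert (Hpriv : forall x0, (C0 x0 \/ F x0) -> exists z, forall c w, (C0 c \/ F c) ->
      Wfr m ft lo hi x Kc a T F w -> z = c + w -> c = x0).
  { intros x0 [H0|H0].
    - destruct (Hcov x0 H0) as [j [Hj HT]].
      set (rj := (a j + ft) mod m) in *.
      exists (rj + x0). intros c w Hc Hw Hz.
      assert (Hzm : (rj + x0) mod m = rj).
      { rewrite Zplus_mod, (HC0m x0 H0), Z.add_0_r. unfold rj. rewrite !Zmod_mod. reflexivity. }
      assert (Hwe : w = rj + x0 - c) by lia.
      destruct Hc as [Hc|Hc].
      + assert (Hwm : w mod m = rj) by (rewrite Hwe, modsub0; auto).
        destruct Hw as [[k [Hk [Hw1 Hw2]]] | [[k [Hk [Hw1 _]]] | [[Hw1 _] | [_ [_ Hw4]]]]].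
        * assert (k = j) by (apply Hrinj; auto; unfold rj in *; congruence). subst k. unfold rj in *. lia.
        * exfalso. apply (Har k j Hk Hj). unfold rj in *. congruence.
        * exfalso. apply (proj1 (proj2 (proj2 (Hax j Hj)))). unfold rj in *. congruence.
        * exfalso. apply (proj2 (Hw4 j Hj)). unfold rj in *. congruence.
      + assert (Hwm : w mod m = a j).
        { rewrite Hwe, (modsubF m c ft) by auto. rewrite Hzm. apply Hra; auto. }
        destruct Hw as [[k [Hk [Hw1 Hw2]]] | [[k [Hk [Hw1 Hw2]]] | [[Hw1 _] | [_ [_ Hw4]]]]].
        * exfalso. apply (Har j k Hj Hk). unfold rj in *. congruence.
        * assert (k = j) by (apply Hainj; auto; unfold rj in *; congruence). subst k.
          exfalso. apply (Hw2 c Hc). fold rj. replace (w - rj + c) with x0 by lia. auto.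
        * exfalso. apply (proj1 (Hax j Hj)). congruence.
        * exfalso. apply (proj1 (Hw4 j Hj)). congruence.
    - exists (u + Kc * x0). intros c w Hc Hw Hz.
      assert (Hzm : (u + Kc * x0) mod m = u).
      { replace (u + Kc * x0) with (u + ((2*d+1) * x0) * m) by (unfold Kc; ring).
        rewrite Z_mod_plus_full. unfold u. apply Zmod_mod. }
      assert (Hwe : w = u + Kc * x0 - c) by lia.
      destruct Hc as [Hc|Hc].
      + assert (Hwm : w mod m = u) by (rewrite Hwe, modsub0; auto).
        exfalso.
        destruct Hw as [[k [Hk [Hw1 Hw2]]] | [[k [Hk [Hw1 _]]] | [[Hw1 _] | [Hw4 _]]]].
        * apply (proj2 (proj2 (proj2 (Hax k Hk)))). fold u. congruence.
        * apply (proj1 (proj2 (Hax k Hk))). fold u. congruence.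
        * apply Hxu. fold u. congruence.
        * apply Hw4. fold u. congruence.
      + destruct (Z.eq_dec c x0) as [|Hne]; auto. exfalso.
        assert (Hwm : w mod m = x) by (rewrite Hwe, (modsubF m c ft) by auto; rewrite Hzm; auto).
        assert (HE : E w) by (exists x0, c; repeat split; auto).
        destruct Hw as [[k [Hk [Hw1 Hw2]]] | [[k [Hk [Hw1 _]]] | [[Hw1 Hw3] | [_ [Hw4 _]]]]].
        * apply (proj1 (proj2 (proj2 (Hax k Hk)))). congruence.
        * apply (proj1 (Hax k Hk)). congruence.
        * apply Hw3. exact HE.
        * apply Hw4. exact Hwm. }
  split.
  - intro z.
    destruct (classic (exists j, lo <= j <= hi /\ z mod m = (a j + ft) mod m)) as [[j [Hj Hr]] | Hnr].
    + set (rj := (a j + ft) mod m) in *.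
      assert (Hg0 : (z - rj) mod m = 0).
      { rewrite Zminus_mod, Hr. unfold rj. rewrite Zmod_mod, Z.sub_diag. reflexivity. }
      destruct (classic (C0 (z - rj))) as [HC|HnC].
      * exists (z - rj), rj. split; [left; auto|]. split; [|lia].
        left. exists j. split; auto. split; auto. apply Hrm.
      * destruct (Hgap j Hj (z - rj) Hg0 HnC) as [f [w' [Ff [Hgw Hnt]]]].
        exists f, (rj + w'). split; [right; auto|]. split; [|lia].
        right; left. exists j. split; auto. split.
        -- replace (rj + w') with (z - f) by lia. rewrite (modsubF m f ft) by auto.
           rewrite Hr. apply Hra; auto.
        -- intros f' Ff'. fold rj. replace (rj + w' - rj + f') with (w' + f') by ring. auto.
    + destruct (classic (exists j, lo <= j <= hi /\ z mod m = a j)) as [[j [Hj Haj]] | Hna].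
      * destruct (Hself j Hj) as [[H1 [H2 H3]] | H4].
        -- exists fM, (z - fM). split; [right; auto|]. split; [|lia].
           assert (Hm1 : (z - fM) mod m = (a j - ft) mod m) by (rewrite (modsubF m fM ft) by auto; rewrite Haj; auto).
           right; right; right. rewrite Hm1. split; [auto|split; [auto|exact H3]].
        -- destruct (H4 z Haj) as [c [Hc Hn]]. exists c, (z - c). split; [left; auto|]. split; [|lia].
           right; left. exists j. split; auto. split.
           ++ rewrite modsub0; auto.
           ++ intros f Ff. replace (z - c - (a j + ft) mod m + f) with (z - c - (a j + ft) mod m + f) by ring. auto.
      * destruct (Z.eq_dec (z mod m) x) as [Hzx|Hzx].
        -- set (N := Z.abs z + Z.abs (u + Kc * fm - fM) + 1).
           assert (HN : N <= m * N) by (unfold N; nia).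
           exists (m * N), (z - m * N). split; [left; apply HC0N; unfold N; lia|]. split; [|lia].
           right; right; left. split.
           ++ rewrite modsub0; auto. rewrite Z.mul_comm. apply Z_mod_mult.
           ++ intros [f [f' [Ff [Ff' [_ Heq]]]]].
              specialize (Hfmle f Ff). specialize (HfMle f' Ff').
              assert (Kc * fm <= Kc * f) by (apply Z.mul_le_mono_nonneg_l; lia).
              unfold N in *. lia.
        -- destruct (Z.eq_dec (z mod m) u) as [Hzu|Hzu].
           ++ destruct (classic (exists f, F f /\ ~ E (z - f))) as [[f [Ff Hne]] | Hall].
              ** exists f, (z - f). split; [right; auto|]. split; [|lia].
                 right; right; left. split; auto.
                 rewrite (modsubF m f ft) by auto. rewrite Hzu. auto.
              ** exfalso.
                 assert (Hall' : forall f, F f -> E (z - f)).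
                 { intros f Ff. apply NNPP. intro Hn. apply Hall. eauto. }
                 destruct (Hall' fM HfM) as [g [g' [Fg [Fg' [_ Heq1]]]]].
                 destruct (Hall' fm Hfm) as [h [h' [Fh [Fh' [_ Heq2]]]]].
                 pose proof (HfMle g Fg). pose proof (Hfmle g Fg).
                 pose proof (HfMle g' Fg'). pose proof (Hfmle g' Fg').
                 pose proof (HfMle h Fh). pose proof (Hfmle h Fh).
                 pose proof (HfMle h' Fh'). pose proof (Hfmle h' Fh').
                 assert (Hhg : h - g = 0).
                 { apply (mul_small Kc); [lia|].
                   replace (Kc * (h - g)) with (Kc * h - Kc * g) by ring. unfold d in *. lia. }
                 assert (h = g) by lia. subst h.
                 assert (g' = fM) by (unfold d in *; lia).
                 destruct (Hall' g Fg) as [k [k' [Fk [Fk' [Hkk Heq3]]]]].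
                 pose proof (HfMle k Fk). pose proof (Hfmle k Fk).
                 pose proof (HfMle k' Fk'). pose proof (Hfmle k' Fk').
                 assert (Hgk : g - k = 0).
                 { apply (mul_small Kc); [lia|].
                   replace (Kc * (g - k)) with (Kc * g - Kc * k) by ring. unfold d in *. lia. }
                 apply Hkk. assert (g = k) by lia. subst k. lia.
           ++ exists 0, z. split; [left; replace 0 with (m * 0) by ring; apply HC0N; lia|]. split; [|lia].
              right; right; right. split; auto. split; auto.
              intros j Hj. split.
              ** intro H. apply Hna. eauto.
              ** intro H. apply Hnr. eauto.
  - intros C' HC'sub [x0 [Hx0 Hnx0]] Hall.
    destruct (Hpriv x0 Hx0) as [z Hz].
    destruct (Hall z) as [c [w [Hc [Hw Hzcw]]]].
    assert (c = x0) by (apply (Hz c w); auto).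
    subst c. contradiction.
Qed.

Definition Dist (m ft lo hi x : Z) (a : Z -> Z) : Prop :=
  0 <= x < m /\ (forall j, lo <= j <= hi -> 0 <= a j < m) /\
  (forall j k, lo <= j <= hi -> lo <= k <= hi -> a j = a k -> j = k) /\
  (forall j k, lo <= j <= hi -> lo <= k <= hi -> (a j + ft) mod m = (a k + ft) mod m -> j = k) /\
  (forall j k, lo <= j <= hi -> lo <= k <= hi -> a j <> (a k + ft) mod m) /\
  (forall j, lo <= j <= hi -> a j <> x /\ a j <> (x + ft) mod m /\
       (a j + ft) mod m <> x /\ (a j + ft) mod m <> (x + ft) mod m) /\
  x <> (x + ft) mod m.

Definition Gok (m ft lo hi x : Z) (a : Z -> Z) (j : Z) : Prop :=
  (a j - ft) mod m <> x /\ (a j - ft) mod m <> (x + ft) mod m /\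
  forall k, lo <= k <= hi -> (a j - ft) mod m <> a k /\ (a j - ft) mod m <> (a k + ft) mod m.

Definition pl (ft j : Z) := 2 * ft * (j / ft) + j mod ft.

Lemma pl_inj ft j j' al be : 1 <= ft -> 0 <= al <= 1 -> 0 <= be <= 1 ->
  pl ft j + ft * al = pl ft j' + ft * be -> j = j' /\ al = be.
Proof.
  intros Hft Hal Hbe H. unfold pl in H.
  pose proof (Z_div_mod_eq_full j ft). pose proof (Z_div_mod_eq_full j' ft).
  pose proof (Z.mod_pos_bound j ft ltac:(lia)). pose proof (Z.mod_pos_bound j' ft ltac:(lia)).
  set (Q := j / ft) in *. set (Q' := j' / ft) in *.
  set (R := j mod ft) in *. set (R' := j' mod ft) in *.
  assert (Hk : 2 * Q + al - 2 * Q' - be = 0).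
  { apply (mul_small ft); [lia|]. nia. }
  assert (al = be) by lia. assert (Q = Q') by lia. subst Q'. split; [|auto]. nia.
Qed.

Lemma pl_small ft j : 0 <= j < ft -> pl ft j = j.
Proof. intros H. unfold pl. rewrite Z.div_small, Z.mod_small by lia. ring. Qed.

Lemma pl_bound ft q s m n j : 1 <= ft -> n + 1 = ft * q + s -> 0 <= s < ft -> 0 <= q ->
  m >= ft + 2 * ft * q + s -> 0 <= j <= n -> 0 <= pl ft j /\ pl ft j + ft < m.
Proof.
  intros Hft Hn Hs Hq Hm Hj. unfold pl.
  pose proof (Z_div_mod_eq_full j ft). pose proof (Z.mod_pos_bound j ft ltac:(lia)).
  assert (HQ0 : 0 <= j / ft) by (apply Z.div_pos; lia).
  set (Q := j / ft) in *. set (R := j mod ft) in *.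
  assert (HQq : Q <= q).
  { destruct (Z_le_gt_dec Q q); auto.
    assert (ft * (q + 1) <= ft * Q) by (apply Z.mul_le_mono_nonneg_l; lia). lia. }
  destruct (Z_lt_le_dec Q q).
  - assert (ft * Q <= ft * (q - 1)) by (apply Z.mul_le_mono_nonneg_l; lia).
    assert (0 <= ft * Q) by nia. lia.
  - assert (Q = q) by lia. subst Q. assert (0 <= ft * q) by nia. lia.
Qed.

Lemma pl_G ft q s m n j t js : 1 <= ft -> n + 1 = ft * q + s -> 0 <= s < ft -> 0 <= q ->
  t = m - ft - 2 * ft * q - s -> 0 <= t ->
  ((js = 0 /\ (t < ft - s \/ ft <= t)) \/ (js = ft - t /\ ft - s <= t < ft)) ->
  0 <= j <= n -> m - ft + js <> pl ft j /\ m - ft + js <> pl ft j + ft.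
Proof.
  intros Hft Hn Hs Hq Ht Ht0 Hjs Hj. unfold pl.
  pose proof (Z_div_mod_eq_full j ft). pose proof (Z.mod_pos_bound j ft ltac:(lia)).
  assert (HQ0 : 0 <= j / ft) by (apply Z.div_pos; lia).
  set (Q := j / ft) in *. set (R := j mod ft) in *.
  assert (HQq : Q <= q).
  { destruct (Z_le_gt_dec Q q); auto.
    assert (ft * (q + 1) <= ft * Q) by (apply Z.mul_le_mono_nonneg_l; lia). lia. }
  destruct (Z_lt_le_dec Q q).
  - assert (ft * Q <= ft * (q - 1)) by (apply Z.mul_le_mono_nonneg_l; lia).
    assert (0 <= ft * Q) by nia. lia.
  - assert (Q = q) by lia. subst Q. assert (0 <= ft * q) by nia. lia.
Qed.

Lemma emap_inj N b i i' : 1 <= N -> 0 <= i < N -> 0 <= i' < N ->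
  (b + i) mod N = (b + i') mod N -> i = i'.
Proof.
  intros HN Hi Hi' H.
  pose proof (Z_div_mod_eq_full (b + i) N). pose proof (Z_div_mod_eq_full (b + i') N).
  assert (Hk : (b + i) / N - (b + i') / N = 0).
  { apply (mul_small N); [lia|]. nia. }
  nia.
Qed.

Lemma layout m ft n i0 : 2 <= m -> 1 <= ft <= m - 1 -> 1 <= n -> 1 <= i0 <= n ->
  m >= ft + 2 * ft * ((n + 1) / ft) + (n + 1) mod ft ->
  (exists a x, Dist m ft 1 n x a /\ Gok m ft 1 n x a i0) \/ (m = 2 * ft /\ n + 2 <= ft).
Proof.
  intros Hm Hft Hn Hi0 Hbud.
  pose proof (Z_div_mod_eq_full (n + 1) ft). pose proof (Z.mod_pos_bound (n + 1) ft ltac:(lia)).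
  assert (Hq0 : 0 <= (n + 1) / ft) by (apply Z.div_pos; lia).
  set (q := (n + 1) / ft) in *. set (s := (n + 1) mod ft) in *.
  set (t := m - ft - 2 * ft * q - s).
  assert (Ht0 : 0 <= t) by (unfold t; lia).
  assert (Hjs : exists js, (js = 0 /\ (t < ft - s \/ ft <= t)) \/ (js = ft - t /\ ft - s <= t < ft)).
  { destruct (classic (t < ft - s \/ ft <= t)); [exists 0; left; auto | exists (ft - t); right; lia]. }
  destruct Hjs as [js Hjs].
  destruct (Z_le_gt_dec js n) as [Hjn | Hjn].
  - left.
    assert (Hjs0 : 0 <= js < ft) by lia.
    set (N := n + 1).
    set (e := fun i => (js - i0 + i) mod N).
    assert (He : forall i, 0 <= e i <= n) by (intro i; unfold e; pose proof (Z.mod_pos_bound (js - i0 + i) N ltac:(unfold N; lia)); unfold N in *; lia).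
    assert (Heinj : forall i i', 0 <= i <= n -> 0 <= i' <= n -> e i = e i' -> i = i')
      by (intros i i' Hi Hi' Hee; apply (emap_inj N (js - i0)); unfold N in *; auto; lia).
    assert (Hei0 : e i0 = js) by (unfold e; replace (js - i0 + i0) with js by ring; apply Z.mod_small; unfold N; lia).
    pose proof (fun j Hj => pl_bound ft q s m n j ltac:(lia) H ltac:(lia) Hq0 Hbud Hj) as Hb.
    assert (Hinj : forall j k al be, 0 <= j <= n -> 0 <= k <= n -> 0 <= al <= 1 -> 0 <= be <= 1 ->
       pl ft (e j) + ft * al = pl ft (e k) + ft * be -> 0 <= j <= n -> 0 <= k <= n -> j = k /\ al = be).
    { intros j k al be Hj Hk Hal Hbe Heq _ _. destruct (pl_inj ft (e j) (e k) al be ltac:(lia) Hal Hbe Heq).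
      split; auto. }
    assert (Hmodr : forall j, 0 <= j <= n -> (pl ft (e j) + ft) mod m = pl ft (e j) + ft).
    { intros j Hj. apply Z.mod_small. specialize (Hb (e j) (He j)). lia. }
    exists (fun i => pl ft (e i)), (pl ft (e 0)).
    split.
    + unfold Dist. rewrite !Hmodr by lia.
      pose proof (Hb (e 0) (He 0)).
      split; [lia|]. split.
      { intros j Hj. pose proof (Hb (e j) (He j)). lia. }
      split.
      { intros j k Hj Hk Heq. destruct (Hinj j k 0 0) as [? _]; try lia. }
      split.
      { intros j k Hj Hk Heq. rewrite !Hmodr in Heq by lia. destruct (Hinj j k 0 0) as [? _]; try lia. }
      split.
      { intros j k Hj Hk Heq. rewrite !Hmodr in Heq by lia. destruct (Hinj j k 0 1) as [_ ?]; try lia. }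
      split; [|lia].
      intros j Hj. rewrite !Hmodr by lia.
      repeat split; intro Heq.
      * destruct (Hinj j 0 0 0) as [? _]; try lia.
      * destruct (Hinj j 0 0 1) as [_ ?]; try lia.
      * destruct (Hinj j 0 1 0) as [_ ?]; try lia.
      * destruct (Hinj j 0 1 1) as [? _]; try lia.
    + unfold Gok. rewrite Hei0, pl_small by lia.
      assert (HG : (js - ft) mod m = m - ft + js).
      { symmetry. apply (Z.mod_unique _ _ (-1)); lia. }
      rewrite HG. rewrite !Hmodr by lia.
      pose proof (pl_G ft q s m n (e 0) t js ltac:(lia) H ltac:(lia) Hq0 eq_refl Ht0 Hjs (He 0)).
      split; [lia|]. split; [lia|].
      intros k Hk. pose proof (pl_G ft q s m n (e k) t js ltac:(lia) H ltac:(lia) Hq0 eq_refl Ht0 Hjs (He k)).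
      rewrite Hmodr by lia. lia.
  - right.
    assert (q = 0).
    { destruct (Z_le_gt_dec q 0); [lia|].
      assert (ft * 1 <= ft * q) by (apply Z.mul_le_mono_nonneg_l; lia). lia. }
    subst q. unfold t in *. lia.
Qed.

Lemma layoutB m ft n : 1 <= ft -> m = 2 * ft -> n + 2 <= ft -> 0 <= n ->
  Dist m ft 0 n (n + 1) (fun j => j).
Proof.
  intros Hft Hm Hn Hn0.
  assert (Hr : forall j, 0 <= j <= n + 1 -> (j + ft) mod m = j + ft) by (intros; apply Z.mod_small; lia).
  unfold Dist. rewrite Hr by lia.
  split; [lia|]. split; [intros; lia|]. split; [intros; lia|].
  split; [intros j k Hj Hk; rewrite !Hr by lia; lia|].
  split; [intros j k Hj Hk; rewrite !Hr by lia; lia|].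
  split; [|lia]. intros j Hj. rewrite Hr by lia. lia.
Qed.

Lemma sc1 m ft (C0 F T : zset) aj : 2 <= m -> (forall k, 0 <= k -> C0 (m * k)) ->
  (forall L, exists v, v < L /\ (v + ft) mod m = 0 /\ forall f, F f -> ~ T (v + f)) ->
  forall y, y mod m = aj -> exists c, C0 c /\ forall f, F f -> ~ T (y - c - (aj + ft) mod m + f).
Proof.
  intros Hm HC0N H y Hy.
  set (r := (aj + ft) mod m).
  destruct (H (y - r)) as [v [Hv [Hvm Hvf]]].
  exists (y - r - v). split.
  - assert (Hc : (y - r - v) mod m = 0).
    { replace (y - r - v) with ((y + ft - r) - (v + ft)) by ring. apply sub00; auto.
      rewrite Zminus_mod. rewrite <- Zplus_mod_idemp_l, Hy. unfold r. rewrite Zmod_mod, Z.sub_diag. reflexivity. }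
    apply Z.div_exact in Hc; [|lia]. rewrite Hc. apply HC0N. apply Z.div_pos; lia.
  - intros f Ff. replace (y - (y - r - v) - r + f) with (v + f) by ring. auto.
Qed.

Lemma sc2 m ft (C0 F T : zset) aj fm : (forall f, F f -> fm <= f) ->
  (exists L0, forall t, T t -> t < L0) -> (forall L, exists c, C0 c /\ c < L) ->
  forall y, y mod m = aj -> exists c, C0 c /\ forall f, F f -> ~ T (y - c - (aj + ft) mod m + f).
Proof.
  intros Hfm [L0 HL0] Hunb y _.
  destruct (Hunb (y - (aj + ft) mod m + fm - L0)) as [c [Hc Hcl]].
  exists c. split; auto. intros f Ff HT. apply HL0 in HT. specialize (Hfm f Ff). lia.
Qed.

Lemma p1 m ft (F T : zset) K fM : 2 <= m -> (forall f, F f -> f <= fM) -> (forall t, T t -> K <= t) ->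
  forall L, exists v, v < L /\ (v + ft) mod m = 0 /\ forall f, F f -> ~ T (v + f).
Proof.
  intros Hm HfM HK L.
  set (N := Z.abs L + Z.abs K + Z.abs fM + Z.abs ft + 1).
  assert (HN : N <= m * N) by (unfold N; nia).
  exists (- ft - m * N). split; [unfold N in *; lia|]. split.
  - replace (- ft - m * N + ft) with ((- N) * m) by ring. apply Z_mod_mult.
  - intros f Ff HT. apply HK in HT. specialize (HfM f Ff). unfold N in *. lia.
Qed.

Lemma mac_ext (C C' : zset) : (forall z, C z <-> C' z) -> arises_as_MAC C -> arises_as_MAC C'.
Proof.
  intros H [W [Hc Hmin]]. exists W. split.
  - intro z. destruct (Hc z) as [c [w [Hc1 [Hw Hz]]]]. exists c, w. split; [apply H; auto|auto].
  - intros C'' Hsub [x [Hx Hn]] Hall. apply (Hmin C'').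
    + intros y Hy. apply H. apply Hsub. auto.
    + exists x. split; [apply H; auto|auto].
    + auto.
Qed.

Theorem theorem8 (m : Z) (B F : zset) (ft : Z) (n : Z) (S : Z -> zset) :
  2 <= m ->
  (forall b, B b -> mult_int m b) ->
  ~ finite_set B ->
  finite_set F -> (exists f, F f) ->
  1 <= ft <= m - 1 ->
  (forall f, F f -> f mod m = ft) ->
  1 <= n ->
  (forall x, (exists i, 1 <= i <= n /\ S i x) <-> (mult_nat m x \/ B x)) ->
  (forall i, 1 <= i <= n ->
     exists Wi : zset, forall x, (mult_int m x /\ ~ S i x) <-> sumset F Wi x) ->
  m >= ft + 2 * ft * ((n + 1) / ft) + (n + 1) mod ft ->
  arises_as_MAC (fun x => mult_nat m x \/ B x \/ F x).
Proof.
  intros Hm HB _ HFfin HFne Hft HFm Hn HS HW Hbud.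
  set (C0 := fun z => mult_nat m z \/ B z).
  apply (mac_ext (fun z => C0 z \/ F z)); [intro z; unfold C0; tauto|].
  assert (Hintmod : forall z, mult_int m z -> z mod m = 0).
  { intros z [k ->]. rewrite Z.mul_comm. apply Z_mod_mult. }
  assert (HC0int : forall c, C0 c -> mult_int m c).
  { intros c [[k [_ ->]]|Hb]; [exists k; auto | apply HB; auto]. }
  assert (HC0m : forall c, C0 c -> c mod m = 0) by (intros; apply Hintmod, HC0int; auto).
  assert (HC0N : forall k, 0 <= k -> C0 (m * k)) by (intros k Hk; left; exists k; auto).
  assert (HSC0 : forall i z, 1 <= i <= n -> S i z -> C0 z) by (intros i z Hi Hz; apply HS; eauto).
  destruct (fmax F HFfin HFne) as [fM [HfM HfMle]].
  destruct (fmin F HFfin HFne) as [fm [Hfm Hfmle]].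
  assert (Hgapl : forall i, 1 <= i <= n -> forall T : zset, (forall z, T z -> S i z) ->
     forall g, g mod m = 0 -> ~ C0 g -> exists f w, F f /\ g = f + w /\ forall f', F f' -> ~ T (w + f')).
  { intros i Hi T HT g Hg HnC. destruct (HW i Hi) as [Wi HWi].
    assert (HnS : ~ S i g) by (intro; apply HnC; apply (HSC0 i); auto).
    assert (Hgi : mult_int m g) by (exists (g / m); apply Z.div_exact; lia).
    destruct (proj1 (HWi g) (conj Hgi HnS)) as [f [w [Ff [Ww Hgw]]]].
    exists f, w. split; auto. split; auto.
    intros f' Ff' HTw. apply HT in HTw.
    assert (Hs : sumset F Wi (w + f')) by (exists f', w; repeat split; auto; lia).
    apply HWi in Hs. destruct Hs; contradiction. }
  set (big := fun i => exists K, forall z, mult_int m z -> z < K -> S i z).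
  assert (Hnb : forall i, 1 <= i <= n -> ~ big i -> forall T : zset, (forall z, T z -> S i z) ->
     forall L, exists v, v < L /\ (v + ft) mod m = 0 /\ forall f, F f -> ~ T (v + f)).
  { intros i Hi Hnbi T HT L. destruct (HW i Hi) as [Wi HWi].
    assert (Hex : exists g, mult_int m g /\ g < L + fm /\ ~ S i g).
    { apply NNPP; intro Hno. apply Hnbi. exists (L + fm). intros z Hz Hzl.
      apply NNPP; intro. apply Hno; eauto. }
    destruct Hex as [g [Hg [Hgl HgS]]].
    destruct (proj1 (HWi g) (conj Hg HgS)) as [f [w [Ff [Ww Hgw]]]].
    exists w. split; [specialize (Hfmle f Ff); lia|]. split.
    - replace (w + ft) with (g - (f - ft)) by lia. apply sub00; [apply Hintmod; auto|].
      rewrite Zminus_mod, (HFm f Ff), (Z.mod_small ft m) by lia. rewrite Z.sub_diag. reflexivity.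
    - intros f' Ff' HTw. apply HT in HTw.
      assert (Hs : sumset F Wi (w + f')) by (exists f', w; repeat split; auto; lia).
      apply HWi in Hs. destruct Hs; contradiction. }
  assert (Hi0 : exists i0, 1 <= i0 <= n /\ (big i0 \/ forall i, 1 <= i <= n -> ~ big i)).
  { destruct (classic (exists i, 1 <= i <= n /\ big i)) as [[i [Hi Hb]]|Hno].
    - exists i; auto.
    - exists 1. split; [lia|]. right. intros i Hi Hb. apply Hno; eauto. }
  destruct Hi0 as [i0 [Hi0 Hbig]].
  assert (Hother : forall i, 1 <= i <= n -> forall aj y, 0 <= aj < m -> y mod m = aj ->
     exists c, C0 c /\ forall f, F f -> ~ (S i (y - c - (aj + ft) mod m + f) /\ ~ S i0 (y - c - (aj + ft) mod m + f))).
  { intros i Hi aj y Haj Hy.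
    apply (sc1 m ft C0 F (fun z => S i z /\ ~ S i0 z) aj Hm HC0N); auto.
    destruct Hbig as [[K HK] | Hall].
    - apply (p1 m ft F (fun z => S i z /\ ~ S i0 z) K fM Hm HfMle).
      intros t [Ht Hnt]. destruct (Z_le_gt_dec K t); auto.
      exfalso. apply Hnt. apply HK; [apply HC0int; apply (HSC0 i); auto | lia].
    - apply (Hnb i Hi (Hall i Hi) (fun z => S i z /\ ~ S i0 z)). intros z [Hz _]; auto. }
  destruct (layout m ft n i0 Hm Hft Hn Hi0 Hbud) as [[a [x [HD HG]]] | [Hm2 Hnft]].
  -
    destruct HD as (Hx & Ha & Hainj & Hrinj & Har & Hax & Hxu).
    set (T := fun i z => if Z.eq_dec i i0 then S i0 z else (S i z /\ ~ S i0 z)).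
    apply (framework m ft C0 F 1 n x a T); auto.
    + intros c Hc. destruct (proj2 (HS c) Hc) as [i [Hi Hsi]].
      destruct (classic (S i0 c)) as [H0|H0].
      * exists i0. split; auto. unfold T. destruct (Z.eq_dec i0 i0); [auto|congruence].
      * exists i. split; auto. unfold T. destruct (Z.eq_dec i i0); [subst; contradiction|auto].
    + intros j Hj. apply (Hgapl j Hj). intros z. unfold T. destruct (Z.eq_dec j i0); [subst; auto|tauto].
    + intros j Hj. destruct (Z.eq_dec j i0) as [->|Hne].
      * left. exact HG.
      * right. intros y Hy. unfold T. destruct (Z.eq_dec j i0); [contradiction|].
        apply (Hother j Hj (a j) y (Ha j Hj) Hy).
  -
    pose proof (layoutB m ft n ltac:(lia) Hm2 Hnft ltac:(lia)) as HD.
    destruct HD as (Hx & Ha & Hainj & Hrinj & Har & Hax & Hxu).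
    set (T := fun j z => if Z.eq_dec j 0 then (S i0 z /\ 0 <= z)
                         else if Z.eq_dec j i0 then (S i0 z /\ z < 0) else (S j z /\ ~ S i0 z)).
    apply (framework m ft C0 F 0 n (n + 1) (fun j => j) T); auto.
    + intros c Hc. destruct (proj2 (HS c) Hc) as [i [Hi Hsi]].
      destruct (classic (S i0 c)) as [H0|H0].
      * destruct (Z_le_gt_dec 0 c).
        -- exists 0. split; [lia|]. unfold T. destruct (Z.eq_dec 0 0); [auto|congruence].
        -- exists i0. split; [lia|]. unfold T. destruct (Z.eq_dec i0 0); [lia|].
           destruct (Z.eq_dec i0 i0); [split; auto; lia|congruence].
      * exists i. split; [lia|]. unfold T. destruct (Z.eq_dec i 0); [lia|].
        destruct (Z.eq_dec i i0); [subst; contradiction|auto].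
    + intros j Hj. unfold T. destruct (Z.eq_dec j 0).
      * apply (Hgapl i0 Hi0 (fun z => S i0 z /\ 0 <= z)). intros z [Hz _]; auto.
      * destruct (Z.eq_dec j i0).
        -- apply (Hgapl i0 Hi0 (fun z => S i0 z /\ z < 0)). intros z [Hz _]; auto.
        -- apply (Hgapl j ltac:(lia) (fun z => S j z /\ ~ S i0 z)). intros z [Hz _]; auto.
    + intros j Hj. right. intros y Hy. unfold T. destruct (Z.eq_dec j 0) as [->|Hj0].
      * apply (sc1 m ft C0 F (fun z => S i0 z /\ 0 <= z) 0 Hm HC0N); auto.
        apply (p1 m ft F (fun z => S i0 z /\ 0 <= z) 0 fM Hm HfMle). intros t [_ Ht]; auto.
      * destruct (Z.eq_dec j i0) as [->|Hji].
        -- destruct Hbig as [[K HK] | Hall].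
           ++ apply (sc2 m ft C0 F (fun z => S i0 z /\ z < 0) i0 fm Hfmle); auto.
              ** exists 0. intros t [_ Ht]; auto.
              ** intros L. set (N := Z.abs L + Z.abs K + 1).
                 assert (HN : N <= m * N) by (unfold N; nia).
                 exists (m * (- N)). split; [|unfold N in *; lia].
                 apply (HSC0 i0); auto. apply HK; [exists (- N); auto | unfold N in *; lia].
           ++ apply (sc1 m ft C0 F (fun z => S i0 z /\ z < 0) i0 Hm HC0N); auto.
              apply (Hnb i0 Hi0 (Hall i0 Hi0) (fun z => S i0 z /\ z < 0)). intros z [Hz _]; auto.
        -- apply (Hother j ltac:(lia) j y ltac:(lia) Hy).
Qed.
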